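(* Let $k\ge1$, let $p,q_1,\dots,q_k$ be primes with $p<q_1<\cdots<q_k$, and let $a$ be a positive integer. If $p^{a-2}>q_1\cdots q_{k-1}q_k^2$, then $p^a$ reduces to $p^bq_1\cdots q_k$, where $$b=\left\lfloor\frac12\left(a-\frac{\log(q_1\cdots q_{k-1})}{\log p}\right)\right\rfloor$$ (the empty product being $1$).
   Context: For a positive integer $n$, $\mathcal{D}(n)$ is the set of positive divisors of $n$, and $\lambda(n)$ is the least prime factor of $n$ if $n\ge2$, with $\lambda(1)=1$. For positive integers $m,n$, a function $f:\mathcal{D}(n)\to\mathcal{D}(m)$ is called reducing if for all $d,d'\in\mathcal{D}(n)$: (a) $f(d)\le d$; (b) $\frac{m/f(d)}{n/d}\le\min\{1,\ \lambda(m/f(d))/\lambda(n/d)\}$; (c) if $f(d)=2^if(d')$ for some $i\in\mathbb{Z}$, then $d=2^jd'$ for some $j\in\mathbb{Z}$. We say $n$ reduces to $m$ if a reducing function $\mathcal{D}(n)\to\mathcal{D}(m)$ exists. *)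

(* Defs.v *)
From Stdlib Require Import Reals ZArith.
From mathcomp Require Import all_boot all_order all_algebra.
Set Implicit Arguments. Unset Strict Implicit. Unset Printing Implicit Defensive.
Import Order.TTheory GRing.Theory Num.Theory.

Definition lam (n : nat) : nat := if (2 <= n)%N then pdiv n else 1%N.

Local Open Scope ring_scope.

(* f : D(n) -> D(m) is represented by a function on nat, constrained on the
   positive divisors d of n (n > 0 in all uses, so divisors are positive). *)
Definition reducing (n m : nat) (f : nat -> nat) : Prop :=
  (forall d, (d %| n)%N -> (f d %| m)%N) /\
  (forall d, (d %| n)%N -> (f d <= d)%N) /\
  (forall d, (d %| n)%N ->
     ((m %/ f d)%N%:R / (n %/ d)%N%:R : rat)
       <= Num.min 1 ((lam (m %/ f d))%:R / (lam (n %/ d))%:R)) /\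
  (forall d d', (d %| n)%N -> (d' %| n)%N ->
     (exists i : int, ((f d)%:R : rat) = (2 : rat) ^ i * (f d')%:R) ->
     (exists j : int, (d%:R : rat) = (2 : rat) ^ j * d'%:R)).

Definition reduces (n m : nat) : Prop := exists f : nat -> nat, reducing n m f.

(* p^(a-2) > X, with a possibly < 2 (computed in Q with integer exponent) *)
Definition pow_gt (p a X : nat) : Prop :=
  (X%:R : rat) < (p%:R : rat) ^ (a%:Z - 2%:Z).

Local Close Scope ring_scope.

Definition bexp (a p P : nat) : Z :=
  Int_part (Rdiv (Rminus (INR a) (Rdiv (ln (INR P)) (ln (INR p)))) (IZR 2)).

(* Main.v *)
Require Import Defs.
From Stdlib Require Import ZArith.
From Stdlib Require Import Reals Lra Lia.

Lemma bexp_spec_std (a p R : nat) : (1 < p)%nat -> (0 < R)%nat -> (R <= Nat.pow p a)%nat ->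
  exists bn, bexp a p R = Z.of_nat bn /\
    (Nat.pow p (2*bn) * R <= Nat.pow p a)%nat /\ (Nat.pow p a < Nat.pow p (2*bn+2) * R)%nat.
Proof.
intros Hp HR HRa.
assert (Pp : (1 < INR p)%R) by (apply lt_1_INR; lia).
assert (lp : (0 < ln (INR p))%R) by (rewrite <- ln_1; apply ln_increasing; lra).
assert (PR : (0 < INR R)%R) by (apply lt_0_INR; lia).
assert (lnpow : forall n, ln (INR (Nat.pow p n)) = (INR n * ln (INR p))%R).
{ intro n. rewrite pow_INR. apply ln_pow. lra. }
assert (posn : forall n, (0 < INR (Nat.pow p n))%R).
{ intro n. rewrite pow_INR. apply pow_lt. lra. }
assert (lnm : forall n, ln (INR (Nat.pow p n * R)) = (INR n * ln (INR p) + ln (INR R))%R).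
{ intro n. rewrite mult_INR, ln_mult, lnpow; auto. }
assert (HRa' : (ln (INR R) <= INR a * ln (INR p))%R).
{ rewrite <- lnpow. destruct (Nat.eq_dec R (Nat.pow p a)) as [E|E].
  - rewrite E; lra.
  - left. apply ln_increasing; auto. apply lt_INR. lia. }
unfold bexp.
set (x := ((INR a - ln (INR R) / ln (INR p)) / IZR 2)%R).
destruct (base_Int_part x) as [B1 B2].
assert (Ex : (x * 2 = INR a - ln (INR R) / ln (INR p))%R) by (unfold x; field; lra).
assert (x0 : (0 <= x)%R).
{ unfold x. apply Rmult_le_pos; [|lra].
  assert (ln (INR R) / ln (INR p) <= INR a)%R.
  { apply (Rmult_le_reg_r (ln (INR p))); auto. unfold Rdiv. rewrite Rmult_assoc, Rinv_l; lra. }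
  lra. }
assert (Z0 : (0 <= Int_part x)%Z).
{ assert (-1 < IZR (Int_part x))%R by lra. apply lt_IZR in H. lia. }
exists (Z.to_nat (Int_part x)). split. { rewrite Z2Nat.id; auto. }
set (bn := Z.to_nat (Int_part x)) in *.
assert (EB : INR bn = IZR (Int_part x)). { unfold bn. rewrite INR_IZR_INZ, Z2Nat.id; auto. }
assert (key : (ln (INR R) / ln (INR p) * ln (INR p) = ln (INR R))%R).
{ unfold Rdiv. rewrite Rmult_assoc, Rinv_l; lra. }
split.
- destruct (Nat.le_gt_cases (Nat.pow p (2*bn) * R) (Nat.pow p a)) as [H|H]; auto.
  exfalso. apply lt_INR in H. apply ln_increasing in H; [|auto].
  rewrite lnm, lnpow in H. rewrite mult_INR in H. simpl (INR 2) in H.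
  assert (INR bn * 2 * ln (INR p) + ln (INR R) <= INR a * ln (INR p))%R.
  { rewrite EB. assert (IZR (Int_part x) * 2 <= INR a - ln (INR R) / ln (INR p))%R.
    { lra. }
    apply (Rmult_le_compat_r (ln (INR p))) in H0; [|lra].
    rewrite Rmult_minus_distr_r, key in H0. lra. }
  lra.
- apply INR_lt. apply ln_lt_inv; auto. { rewrite mult_INR. apply Rmult_lt_0_compat; auto. }
  rewrite lnm, lnpow, plus_INR, mult_INR. simpl (INR 2).
  assert (INR a - ln (INR R) / ln (INR p) < IZR (Int_part x) * 2 + 2)%R.
  { lra. }
  apply (Rmult_lt_compat_r (ln (INR p))) in H; [|lra].
  rewrite Rmult_minus_distr_r, key in H. rewrite EB. lra.
Qed.

From mathcomp Require Import all_boot all_order all_algebra.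
From mathcomp Require Import ring zify.
Set Implicit Arguments. Unset Strict Implicit. Unset Printing Implicit Defensive.
Lemma prod_prefix_dvd (q : nat -> nat) l k : l <= k ->
  \prod_(i < l) q i %| \prod_(i < k) q i.
Proof.
move=> lk; rewrite -!(big_mkord xpredT) (big_cat_nat (leq0n l) lk) /=.
exact: dvdn_mulr.
Qed.

Lemma prod_pos (q : nat -> nat) l k : l <= k -> (forall i, i < k -> 0 < q i) ->
  0 < \prod_(i < l) q i.
Proof.
move=> lk H; rewrite prodn_gt0 // => i; apply: H; exact: leq_trans (ltn_ord i) lk.
Qed.

Lemma prod_strict (q : nat -> nat) k : (forall i, i < k -> 1 < q i) ->
  forall l l', l < l' -> l' <= k -> \prod_(i < l) q i < \prod_(i < l') q i.
Proof.
move=> H l l'; elim: l' => // l' IH ll' l'k.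
rewrite big_ord_recr /=.
have pl : 0 < \prod_(i < l') q i.
  by apply: (@prod_pos q l' k) => // [|i ik]; [exact: ltnW | exact: ltnW (H i ik)].
have : \prod_(i < l') q i < \prod_(i < l') q i * q l'.
  by rewrite -{1}(muln1 (\prod_(i < l') q i)) ltn_pmul2l // H.
rewrite leq_eqVlt in ll'; case/orP: ll' => [/eqP [<-] //|ll'] h.
apply: ltn_trans h; apply: IH => //; exact: ltnW.
Qed.

Lemma prod_prime_dvd (q : nat -> nat) r l : prime r -> r %| \prod_(i < l) q i ->
  exists2 i, i < l & r %| q i.
Proof.
move=> pr; elim: l => [|l IH]; first by rewrite big_ord0 dvdn1 => /eqP E; rewrite E in pr.
rewrite big_ord_recr /= Euclid_dvdM // => /orP [/IH [i il ri]|rq].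
  by exists i => //; exact: ltnW.
by exists l.
Qed.
Lemma Lmax_spec (P : pred nat) k : 0 < k -> P 0 ->
  \max_(l < k | P l) l < k /\ P (\max_(l < k | P l) l) /\
  forall l, l < k -> P l -> l <= \max_(l < k | P l) l.
Proof.
move=> k0 P0.
have P0' : P (Ordinal k0) by [].
rewrite (bigmax_eq_arg (Ordinal k0) P0').
case: arg_maxnP => // i Pi maxi; split => //; split => // l lk Pl.
exact: (maxi (Ordinal lk) Pl).
Qed.

Lemma core (k p a b : nat) (q : nat -> nat) :
  1 <= k -> prime p -> (forall i, i < k -> prime (q i)) ->
  (forall i, i < k -> p < q i) -> (forall i, i < k -> q i <= q k.-1) ->
  p ^ (2 * b) * \prod_(i < k.-1) q i <= p ^ a ->
  p ^ a < p ^ (2 * b + 2) * \prod_(i < k.-1) q i ->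
  p ^ 2 * (\prod_(i < k.-1) q i * q k.-1 ^ 2) < p ^ a ->
  exists g : nat -> nat,
  [/\ forall j, j <= a -> g j %| p ^ b * \prod_(i < k) q i,
      forall j, j <= a -> g j <= p ^ j,
      forall j, j <= a -> p ^ b * \prod_(i < k) q i <= p ^ (a - j) * g j &
      forall j j', j <= a -> j' <= a -> g j = g j' -> j = j'].
Proof.
move=> k1 pP qP pq qle F1 F2 F3.
have p1 : 1 < p := prime_gt1 pP.
have p0 : 0 < p by apply: ltnW.
have qpos : forall i, i < k -> 0 < q i by move=> i ik; exact: prime_gt0 (qP i ik).
have qgt1 : forall i, i < k -> 1 < q i by move=> i ik; exact: prime_gt1 (qP i ik).
set D := fun l => \prod_(i < l) q i.
have Dpos : forall l, l <= k -> 0 < D l by move=> l lk; exact: prod_pos lk qpos.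
have Dstr : forall l l', l < l' -> l' <= k -> D l < D l' by exact: prod_strict qgt1.
have Ddvd : forall l, l <= k -> D l %| D k by move=> l lk; exact: prod_prefix_dvd.
have Dcop : forall l, l <= k -> coprime p (D l).
  move=> l lk; rewrite prime_coprime //; apply/negP => /(prod_prime_dvd pP) [i il].
  have ik : i < k by exact: leq_trans il lk.
  rewrite dvdn_prime2 // ?qP // => /eqP E.
  by have := pq i ik; rewrite E ltnn.
have DS : forall l, D l.+1 = D l * q l by move=> l; rewrite /D big_ord_recr.
set R := \prod_(i < k.-1) q i in F1 F2 F3.
set qk := q k.-1 in F3 qle.
have DR : D k.-1 = R by [].
have DQ : D k = R * qk by rewrite -DR -DS prednK.
have kk : k.-1 < k by rewrite prednK.
have R0 : 0 < R by rewrite -DR; apply: Dpos; exact: ltnW.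
have qk0 : 0 < qk by exact: qpos.
have E2 : p ^ (2 * b + 2) * R = p ^ 2 * R * (p ^ b) ^ 2.
  by rewrite expnD (mulnC 2 b) expnM; ring.
have D1 : qk < p ^ b.
  rewrite -ltn_sqr -(ltn_pmul2l (_ : 0 < p ^ 2 * R)); last by rewrite muln_gt0 expn_gt0 p0.
  rewrite -E2; apply: leq_ltn_trans F2; apply: ltnW; by rewrite -mulnA.
have ba : 2 * b <= a.
  rewrite -(leq_exp2l _ _ p1); apply: leq_trans F1; exact: leq_pmulr.
have D2 : p ^ (b + 1) * (R * qk) < p ^ a.
  rewrite -(ltn_sqr (p ^ (b + 1) * _)).
  have -> : (p ^ (b + 1) * (R * qk)) ^ 2 = (p ^ (2 * b) * R) * (p ^ 2 * (R * qk ^ 2)).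
    by rewrite !expnD; ring.
  have -> : (p ^ a) ^ 2 = p ^ a * p ^ a by ring.
  apply: leq_ltn_trans (leq_mul F1 (leqnn _)) _.
  by rewrite ltn_pmul2l // expn_gt0 p0.
set s := a - b.
have Es : p ^ a = p ^ b * p ^ s by rewrite -expnD subnKC //; lia.
have D2' : p * (R * qk) < p ^ s.
  rewrite -(ltn_pmul2l (_ : 0 < p ^ b)) ?expn_gt0 ?p0 // -Es.
  have -> : p ^ b * (p * (R * qk)) = p ^ (b + 1) * (R * qk) by rewrite expnD expn1; ring.
  exact: D2.
have D3 : a <= 2 * b + 1 + up_log p R.
  rewrite -ltnS -(ltn_exp2l _ _ p1); apply: (leq_trans F2).
  have -> : (2 * b + 1 + up_log p R).+1 = 2 * b + 2 + up_log p R by lia.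
  rewrite [p ^ (2 * b + 2 + _)]expnD leq_pmul2l ?expn_gt0 ?p0 //; exact: up_logP.
set L := fun j => \max_(l < k | D l <= p ^ j) l.
have Lspec : forall j, [/\ L j < k, D (L j) <= p ^ j &
    forall l, l < k -> D l <= p ^ j -> l <= L j].
  move=> j; have P0 : D 0 <= p ^ j by rewrite /D big_ord0 expn_gt0 p0.
  by have [h1 [h2 h3]] := @Lmax_spec (fun l => D l <= p ^ j) k k1 P0.
set c := fun j => up_log p (D (L j)).
have Lev : forall j, j < s ->
    [/\ c j <= j, j - c j <= b, D (L j) <= p ^ c j & p ^ c j <= p * D (L j)].
  move=> j js; have [Lk DL Lmax] := Lspec j.
  have cj : c j <= j := up_log_min p1 DL.
  have Dc : D (L j) <= p ^ c j := up_logP _ p1.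
  have cD : p ^ c j <= p * D (L j).
    case: (ltnP 1 (D (L j))) => h.
      have hh := up_log_gtn p1 h.
      have c0 : 0 < c j by rewrite /c up_log_gt0 p1 h.
      rewrite -(prednK c0) expnS leq_pmul2l //; exact: ltnW.
    have E : D (L j) = 1 by have := Dpos (L j) (ltnW Lk); lia.
    by rewrite /c E up_log1 expn0 muln1 ltnW.
  split => //.
  case: (ltnP (L j).+1 k) => h.
    have : ~~ (D (L j).+1 <= p ^ j).
      by apply/negP => H; have := Lmax _ h H; rewrite ltnn.
    rewrite -ltnNge DS => H.
    have : p ^ j < p ^ (c j + b).
      apply: (leq_trans H); rewrite expnD; apply: leq_mul; first exact: Dc.
      apply: ltnW; apply: leq_ltn_trans D1; apply: qle; exact: ltn_trans (ltnSn _) h.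
    rewrite ltn_exp2l //; lia.
  have E : L j = k.-1 by lia.
  have : c j = up_log p R by rewrite /c E.
  lia.
set g := fun j => if s <= j then p ^ (j - s) * D k else p ^ (j - c j) * D (L j).
have DkR : D k < p ^ s by rewrite DQ; apply: leq_trans D2'; rewrite ltnS leq_pmull.
exists g; split.
- move=> j ja; rewrite /g; case: ifP => h.
    apply: dvdn_mul; [apply: dvdn_exp2l; lia | exact: dvdnn].
  have [Lk _ _] := Lspec j.
  have [_ jb _ _] := Lev j ltac:(by rewrite ltnNge h).
  apply: dvdn_mul; [exact: dvdn_exp2l | exact: Ddvd (ltnW Lk)].
- move=> j ja; rewrite /g; case: ifP => h.
    have -> : p ^ j = p ^ (j - s) * p ^ s by rewrite -expnD subnK.
    by rewrite leq_pmul2l ?expn_gt0 ?p0 // ltnW.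
  have [cj _ Dc _] := Lev j ltac:(by rewrite ltnNge h).
  have -> : p ^ j = p ^ (j - c j) * p ^ c j by rewrite -expnD subnK.
  by rewrite leq_pmul2l ?expn_gt0 ?p0.
- move=> j ja; rewrite /g; case: ifP => h.
    rewrite mulnA -expnD.
    have -> : a - j + (j - s) = b by lia.
    by [].
  have [cj jb Dc cD] := Lev j ltac:(by rewrite ltnNge h).
  have [Lk _ _] := Lspec j.
  rewrite mulnA -expnD.
  have -> : a - j + (j - c j) = a - c j by lia.
  rewrite -(leq_pmul2r (_ : 0 < p ^ c j)) ?expn_gt0 ?p0 //.
  apply: (@leq_trans (p ^ (b + 1) * (R * qk) * D (L j))).
    apply: (@leq_trans (p ^ b * D k * (p * D (L j)))); first exact: leq_mul.
    apply: eq_leq; rewrite DQ expnD expn1.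
    move: (D (L j)) (p ^ b) => x y; ring.
  have -> : p ^ (a - c j) * D (L j) * p ^ c j = p ^ a * D (L j).
    by rewrite mulnAC -expnD subnK; last exact: leq_trans cj ja.
  rewrite leq_pmul2r; first exact: ltnW D2.
  apply: Dpos; exact: ltnW Lk.
- have lg : forall i l, l <= k -> logn p (p ^ i * D l) = i.
    move=> i l lk; rewrite lognM ?expn_gt0 ?p0 ?Dpos // pfactorK //.
    by rewrite logn_coprime ?Dcop // addn0.
  have Dinj : forall l l', l <= k -> l' <= k -> D l = D l' -> l = l'.
    move=> l l' lk l'k E; case: (ltngtP l l') => // h.
      by have := Dstr _ _ h l'k; rewrite E ltnn.
    by have := Dstr _ _ h lk; rewrite E ltnn.
  have rep : forall j, g j = p ^ (if s <= j then j - s else j - c j) *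
                              D (if s <= j then k else L j).
    by move=> j; rewrite /g; case: ifP.
  have repk : forall j, (if s <= j then k else L j) <= k.
    by move=> j; case: ifP => // _; have [Lk _ _] := Lspec j; exact: ltnW.
  move=> j j' ja ja' E.
  have Ei := congr1 (logn p) E.
  rewrite !rep !lg ?repk // in Ei.
  move: E; rewrite !rep Ei => /eqP; rewrite eqn_pmul2l ?expn_gt0 ?p0 // => /eqP.
  move/Dinj => /(_ (repk j) (repk j')) El.
  move: Ei El.
  case: ifP => h; case: ifP => h'.
  + lia.
  + by move=> _ El; have [Lk _ _] := Lspec j'; rewrite -El ltnn in Lk.
  + by move=> _ El; have [Lk _ _] := Lspec j; rewrite El ltnn in Lk.
  + move=> Ei El.
    have [cj _ _ _] := Lev j ltac:(by rewrite ltnNge h).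
    have [cj' _ _ _] := Lev j' ltac:(by rewrite ltnNge h').
    have Ec : c j = c j' by rewrite /c El.
    lia.
Qed.

Lemma powE m n : Nat.pow m n = m ^ n.
Proof. by elim: n => //= n IH; rewrite expnS IH. Qed.

Lemma bexp_spec a p R : 1 < p -> 0 < R -> R <= p ^ a ->
  exists bn, bexp a p R = Z.of_nat bn /\
    p ^ (2 * bn) * R <= p ^ a /\ p ^ a < p ^ (2 * bn + 2) * R.
Proof.
move=> /ltP h1 /ltP h2 h3.
have h3' : (R <= Nat.pow p a)%coq_nat by apply/leP; rewrite powE.
have [bn [E [A B]]] := bexp_spec_std a p R h1 h2 h3'.
exists bn; split => //; split; [apply/leP | apply/ltP]; rewrite -!powE //.
Qed.

Import Order.TTheory GRing.Theory Num.Theory.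

Local Open Scope ring_scope.
Lemma ratb (e N le lN : nat) : (0 < N)%N -> (0 < lN)%N -> (e <= N)%N -> (e * lN <= le * N)%N ->
  (e%:R / N%:R : rat) <= Num.min 1 (le%:R / lN%:R).
Proof.
move=> N0 lN0 eN el.
rewrite le_min; apply/andP; split.
  by rewrite ler_pdivrMr ?ltr0n // mul1r ler_nat.
by rewrite ler_pdivrMr ?ltr0n // mulrAC ler_pdivlMr ?ltr0n // -!natrM ler_nat.
Qed.
Local Close Scope ring_scope.

Lemma primes_m (k p b : nat) (q : nat -> nat) r :
  prime p -> (forall i, i < k -> prime (q i)) -> (forall i, i < k -> p < q i) ->
  prime r -> r %| p ^ b * \prod_(i < k) q i -> p <= r.
Proof.
move=> pP qP pq rP; rewrite Euclid_dvdM // => /orP [|].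
  rewrite Euclid_dvdX // => /andP [h _]; move: h; rewrite dvdn_prime2 // => /eqP ->.
  exact: leqnn.
move/(prod_prime_dvd rP) => [i ik]; rewrite dvdn_prime2 ?qP // => /eqP ->.
exact: ltnW (pq i ik).
Qed.

Theorem lemma3p9 (k : nat) (p a : nat) (q : nat -> nat) :
  (1 <= k)%N ->
  prime p ->
  (forall i, (i < k)%N -> prime (q i)) ->
  (p < q 0)%N ->
  (forall i, (i.+1 < k)%N -> (q i < q i.+1)%N) ->
  (1 <= a)%N ->
  pow_gt p a ((\prod_(i < k.-1) q i) * (q k.-1) ^ 2)%N ->
  Z.le 0 (bexp a p (\prod_(i < k.-1) q i)) /\
  reduces (p ^ a)
    (p ^ Z.to_nat (bexp a p (\prod_(i < k.-1) q i)) * \prod_(i < k) q i)%N.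
Proof.
move=> k1 pP qP pq0 qinc a1 Hgt.
have p1 := prime_gt1 pP.
have p0 : 0 < p by exact: ltnW.
have qgt : forall i, i < k -> p < q i.
  elim=> [|i IH] ik //; exact: ltn_trans (IH (ltnW ik)) (qinc i ik).
have qle : forall i, i < k -> q i <= q k.-1.
  move=> i ik.
  have H : forall d, i + d < k -> q i <= q (i + d).
    elim=> [|d IH] h; first by rewrite addn0.
    rewrite addnS in h *; apply: leq_trans (IH (ltnW h)) (ltnW (qinc _ h)).
  have := H (k.-1 - i); rewrite subnKC //; [apply; by rewrite prednK | by rewrite -ltnS prednK].
set R := \prod_(i < k.-1) q i in Hgt *.
have R0 : 0 < R.
  apply: (@prod_pos q k.-1 k); first exact: leq_pred.
  by move=> i ik; exact: prime_gt0 (qP i ik).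
have F3 : p ^ 2 * (R * q k.-1 ^ 2) < p ^ a.
  move: Hgt; rewrite /pow_gt.
  case: a a1 => [|[|a']] // _.
    move=> H; exfalso.
    have E : (1%:Z - 2%:Z = -1 :> int)%R by [].
    rewrite E exprN1 in H.
    have X1 : (1 <= (R * q k.-1 ^ 2)%:R :> rat)%R.
      by rewrite ler1n muln_gt0 R0 expn_gt0 prime_gt0 // qP // prednK.
    have : ((p%:R : rat)^-1 <= 1)%R by rewrite invf_le1 ?ltr0n // ler1n.
    move=> h; have := lt_le_trans (le_lt_trans X1 H) h; by rewrite ltxx.
  have E : ((a'.+2)%:Z - 2%:Z = a'%:Z :> int)%R by rewrite -addn2 PoszD addrK.
  rewrite E => H0.
  have H : ((R * q k.-1 ^ 2)%:R < ((p%:R : rat) ^+ a'))%R by exact: H0.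
  rewrite -natrX ltr_nat in H.
  have -> : p ^ a'.+2 = p ^ 2 * p ^ a' by rewrite -expnD addnC addn2.
  by rewrite ltn_pmul2l // expn_gt0 p0.
have Ra : R <= p ^ a.
  apply: ltnW; apply: leq_ltn_trans F3.
  apply: leq_trans (leq_pmulr R _) (leq_pmull _ _); last by rewrite expn_gt0 p0.
  by rewrite expn_gt0 prime_gt0 // qP // prednK.
have [bn [Eb [F1 F2]]] := bexp_spec p1 R0 Ra.
rewrite Eb; split; first exact: Zorder.Zle_0_nat.
rewrite Nat2Z.id.
have [g [G0 Ga Gb Ginj]] := core k1 pP qP qgt qle F1 F2 F3.
set m := p ^ bn * \prod_(i < k) q i.
have m0 : 0 < m.
  rewrite muln_gt0 expn_gt0 p0 /=; apply: (@prod_pos q k k) => // i ik.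
  exact: prime_gt0 (qP i ik).
have gpos : forall j, j <= a -> 0 < g j by move=> j ja; exact: dvdn_gt0 m0 (G0 j ja).
have godd : p != 2 -> forall j, j <= a -> ~~ (2 %| g j).
  move=> p2 j ja; apply/negP => h.
  have := primes_m pP qP qgt (isT : prime 2) (dvdn_trans h (G0 j ja)).
  by move=> h2; move: p2; have -> : p = 2 by apply/eqP; rewrite eqn_leq h2 p1.
exists (fun d => g (logn p d)); split; [|split; [|split]].
- by move=> d /(dvdn_pfactor _ _ pP) [j ja ->]; rewrite pfactorK //; exact: G0.
- by move=> d /(dvdn_pfactor _ _ pP) [j ja ->]; rewrite pfactorK //; exact: Ga.
- move=> d /(dvdn_pfactor _ _ pP) [j ja ->]; rewrite pfactorK //.
  rewrite -expnB //.
  set e := m %/ g j.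
  have em : e * g j = m by rewrite divnK // G0.
  have e0 : 0 < e by move: m0; rewrite -em muln_gt0 => /andP [].
  have eN : e <= p ^ (a - j).
    by rewrite -(leq_pmul2r (gpos j ja)) em; exact: Gb.
  have N0 : 0 < p ^ (a - j) by rewrite expn_gt0 p0.
  case: (ltnP j a) => ja'.
    have lN : lam (p ^ (a - j)) = p.
      have h2 : 2 <= p ^ (a - j).
        have hp : p ^ 1 <= p ^ (a - j) by rewrite leq_exp2l //; lia.
        rewrite expn1 in hp; exact: leq_trans p1 hp.
      by rewrite /lam h2 -(subnSK ja') pdiv_pfactor.
    rewrite lN; apply: ratb => //.
    case: (ltnP 1 e) => e1.
      have le : p <= lam e.
        rewrite /lam e1; apply: (primes_m pP qP qgt (pdiv_prime e1)).
        have em' : e %| m by rewrite -em dvdn_mulr.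
        exact: dvdn_trans (pdiv_dvd e) em'.
      by rewrite mulnC; apply: leq_mul.
    have -> : e = 1 by lia.
    have hp : p ^ 1 <= p ^ (a - j) by rewrite leq_exp2l //; lia.
    by rewrite /lam /= !mul1n -{1}(expn1 p).
  have ja2 : j = a by lia.
  rewrite ja2 subnn expn0 in eN *.
  have -> : e = 1 by lia.
  by rewrite /lam /=; apply: ratb.
- move=> d d' /(dvdn_pfactor _ _ pP) [j ja ->] /(dvdn_pfactor _ _ pP) [j' ja' ->].
  rewrite !pfactorK // => [[i Ei]].
  case: (eqVneq p 2) => [p2|p2].
    exists (j%:Z - j'%:Z)%R; rewrite p2 !natrX.
    rewrite -[(2%:R ^+ j')%R]/((2%:R : rat) ^ j'%:Z)%R.
    rewrite -[(2%:R ^+ j)%R]/((2%:R : rat) ^ j%:Z)%R.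
    by rewrite -expfzDr ?pnatr_eq0 // subrK.
  have go := godd p2.
  suff E : g j = g j' by exists 0%R; rewrite (Ginj _ _ ja ja' E) expr0z mul1r.
  case: i Ei => n Ei.
    have E2 : g j = 2 ^ n * g j'.
      by apply/eqP; rewrite -(eqr_nat rat) natrM natrX Ei.
    case: n E2 {Ei} => [|n] E2; first by rewrite E2 mul1n.
    by have := go j ja; rewrite E2 expnS -mulnA dvdn_mulr.
  have E2 : g j * 2 ^ n.+1 = g j'.
    apply/eqP; rewrite -(eqr_nat rat) natrM natrX Ei NegzE -exprnN.
    by rewrite mulrAC mulVf ?mul1r // expf_neq0 // pnatr_eq0.
  by have := go j' ja'; rewrite -E2 expnS mulnCA dvdn_mulr.
Qed.
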